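(* Let $\mathcal{C}$ be a component of class $i$ (at an upper layer $l$) which has at least $m$ pairwise internally vertex-disjoint long connector paths, where $m=\Omega(k)$. Then every maximal matching in $\mathcal{H}_i[\mathcal{C}]$ has cardinality $\Omega(k)$ (namely at least $m/2$).
   Context: $G=(V,E)$ is a finite undirected graph with vertex connectivity $k$. Fix an integer $L$. The virtual graph $\mathcal{G}$ contains $3L$ copies of each $v\in V$: each lower layer $1,\dots,L$ contains one copy of every node; each upper layer $L+1,\dots,2L$ contains a type-1 copy and a type-2 copy of every node. Every copy of $v$ is adjacent to all other copies of $v$ and to all copies of each neighbor of $v$ in $G$. $\Psi$ maps virtual nodes to real nodes. There are classes $1,\dots,t$. For a fixed upper layer $l$, nodes of layers $1,\dots,l-1$ are old nodes, each assigned a class; a component of class $i$ is a connected component of the subgraph induced by old nodes of class $i$. A long connector path for $\mathcal{C}$ is a path $(s,v,w,u)$ with $s\in\mathcal{C}$, $u$ in a component $\mathcal{C}'\neq\mathcal{C}$ of class $i$ with $\Psi(\mathcal{C})\cap\Psi(\mathcal{C}')=\emptyset$, $v$ a type-2 and $w$ a type-1 node of layer $l$, $v$ having no neighbor in any component of class $i$ other than $\mathcal{C}$ and $w$ having no neighbor in $\mathcal{C}$; its internal vertices are $v,w$, and paths are internally vertex-disjoint if their sets of internal vertices are pairwise disjoint. The helper graph $\mathcal{H}_i[\mathcal{C}]$: for each type-2 node $v$ of layer $l$, a node $v_{\mathcal{C}}$ is added iff $\Psi(v)\notin\Psi(\mathcal{C})$, $v$ has a neighbor in $\mathcal{C}$,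 and $v$ has no neighbor in another component of class $i$; for each such $v_{\mathcal{C}}$ and each type-1 neighbor $w$ of $v$ on layer $l$ that has a neighbor in some component $\mathcal{C}'\neq\mathcal{C}$ of class $i$ but no neighbor in $\mathcal{C}$, a node $w_{\mathcal{C}}$ and the edge $\{v_{\mathcal{C}},w_{\mathcal{C}}\}$ are added. *)

(* Defs.v *)
From mathcomp Require Import all_boot.
Set Implicit Arguments. Unset Strict Implicit. Unset Printing Implicit Defensive.

(* Virtual graph: lower copies (v, j) sit on layer j+1 (layers 1..L);
   upper copies (v, j, b) sit on layer L+j+1 (layers L+1..2L),
   b = false : type-1 copy, b = true : type-2 copy. *)
Section Virtual.
Variables (V : finType) (L : nat).

Definition vnode : finType := ((V * 'I_L) + (V * 'I_L * bool))%type.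

Definition Psi (x : vnode) : V :=
  match x with inl (v, _) => v | inr (v, _, _) => v end.

Definition layer (x : vnode) : nat :=
  match x with inl (_, j) => j.+1 | inr (_, j, _) => L + j.+1 end.

Definition is_type1 (x : vnode) : bool :=
  match x with inr (_, _, false) => true | _ => false end.
Definition is_type2 (x : vnode) : bool :=
  match x with inr (_, _, true) => true | _ => false end.

Variable adjG : rel V.

Definition vadj : rel vnode :=
  fun x y => (x != y) && ((Psi x == Psi y) || adjG (Psi x) (Psi y)).

Variables (t : nat) (cls : vnode -> 'I_t) (l : nat).

Definition old (x : vnode) : bool := layer x < l.
Definition in_class (i : 'I_t) (x : vnode) : bool := old x && (cls x == i).
Definition class_rel (i : 'I_t) : rel vnode :=
  fun x y => [&& vadj x y, in_class i x & in_class i y].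

Definition component (i : 'I_t) (C : {set vnode}) : Prop :=
  exists2 x, in_class i x & C = [set y | connect (class_rel i) x y].

Definition has_nbr_in (x : vnode) (C : {set vnode}) : bool :=
  [exists y in C, vadj x y].

Definition long_connector (i : 'I_t) (C : {set vnode})
    (p : vnode * vnode * vnode * vnode) : Prop :=
  let: (s, v, w, u) := p in
  [/\ s \in C,
      exists C', [/\ component i C', C' <> C, u \in C' &
                     (Psi @: C) :&: (Psi @: C') = set0],
      is_type2 v /\ layer v = l,
      is_type1 w /\ layer w = l &
      [/\ forall C'', component i C'' -> C'' <> C -> ~~ has_nbr_in v C'',
          ~~ has_nbr_in w C &
          [/\ vadj s v, vadj v w & vadj w u]]].

Definition internal (p : vnode * vnode * vnode * vnode) : {set vnode} :=
  let: (_, v, w, _) := p in [set v; w].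

(* helper graph H_i[C] (nodes v_C, w_C identified with v, w) *)
Definition helper_vnode (i : 'I_t) (C : {set vnode}) (v : vnode) : Prop :=
  [/\ is_type2 v /\ layer v = l, Psi v \notin Psi @: C, has_nbr_in v C &
      forall C'', component i C'' -> C'' <> C -> ~~ has_nbr_in v C''].

Definition helper_wnode (i : 'I_t) (C : {set vnode}) (v w : vnode) : Prop :=
  [/\ is_type1 w /\ layer w = l, vadj v w,
      exists C', [/\ component i C', C' <> C & has_nbr_in w C'] &
      ~~ has_nbr_in w C].

Definition helper_edge (i : 'I_t) (C : {set vnode}) (x y : vnode) : Prop :=
  (helper_vnode i C x /\ helper_wnode i C x y) \/
  (helper_vnode i C y /\ helper_wnode i C y x).

End Virtual.

Definition matching (T : finType) (E : T -> T -> Prop) (M : {set {set T}}) : Prop :=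
  (forall e, e \in M -> exists x y, E x y /\ e = [set x; y]) /\
  (forall e1 e2, e1 \in M -> e2 \in M -> e1 != e2 -> [disjoint e1 & e2]).

Definition maximal_matching (T : finType) (E : T -> T -> Prop) (M : {set {set T}}) : Prop :=
  matching E M /\ (forall M', matching E M' -> M \subset M' -> M' = M).

(* Main.v *)
Require Import Defs.
From mathcomp Require Import all_boot.

Lemma conn_in_class (V : finType) (L : nat) (adjG : rel V) t (cls : vnode V L -> 'I_t) l i x y :
  in_class cls l i x -> connect (class_rel adjG cls l i) x y -> in_class cls l i y.
Proof.
move=> Hx /connectP [p Hp ->]; elim: p x Hx Hp => [|z p IH] x Hx //=.
by case/andP => /and3P [_ _ Hz] Hp; apply: IH.
Qed.

Lemma helper (V : finType) (adjG : rel V)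
  (adjG_sym : symmetric adjG) (L t : nat) (cls : vnode V L -> 'I_t) (l : nat)
  (i : 'I_t) (C : {set vnode V L})
  (HC : component adjG cls l i C) s v w u :
  long_connector adjG cls l i C (s, v, w, u) -> helper_edge adjG cls l i C v w.
Proof.
case=> sC [C' [HC' C'C uC' _]] [t2 lv] [t1 lw] [Hv Hw [Hsv Hvw Hwu]].
left; split; last first.
  split => //; exists C'; split => //; apply/existsP; by exists u; rewrite uC' Hwu.
split => //.
- apply/negP; case/imsetP => c cC Hc.
  move: HC => [x0 Hx0 EC].
  have : in_class cls l i c by move: cC; rewrite EC inE; apply: conn_in_class.
  case/andP => oc _.
  move/negP: Hw; apply; apply/existsP; exists c; rewrite cC /=.
  move: Hvw; rewrite /vadj -Hc => /andP [_ H]; apply/andP; split.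
    apply/eqP => E; move: oc; rewrite /old -E lw ltnn //.
  by rewrite eq_sym adjG_sym.
- apply/existsP; exists s; rewrite sC /=.
  move: Hsv; rewrite /vadj => /andP [H1 H2]; rewrite eq_sym H1 /= eq_sym adjG_sym //.
Qed.

Theorem lemma7 (V : finType) (adjG : rel V)
  (adjG_sym : symmetric adjG) (adjG_irr : irreflexive adjG)
  (L t : nat) (cls : vnode V L -> 'I_t) (l : nat) (Hl : L < l <= L + L)
  (i : 'I_t) (C : {set vnode V L})
  (HC : component adjG cls l i C)
  (m : nat) (P : 'I_m -> vnode V L * vnode V L * vnode V L * vnode V L)
  (HP : forall j, long_connector adjG cls l i C (P j))
  (Hdisj : forall j1 j2, j1 != j2 -> [disjoint internal (P j1) & internal (P j2)])
  (M : {set {set vnode V L}})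
  (HM : maximal_matching (helper_edge adjG cls l i C) M) :
  m <= 2 * #|M|.
Proof.
have Hcov : forall j, exists x, (x \in internal (P j)) && (x \in cover M).
  move=> j.
  case: (boolP [exists x, (x \in internal (P j)) && (x \in cover M)]) => [/existsP //|/existsP Hn].
  exfalso.
  have Hd : forall e, e \in M -> [disjoint internal (P j) & e].
    move=> e eM; apply/pred0P => x /=; apply/negbTE/negP => /andP [h1 h2].
    by apply: Hn; exists x; rewrite h1; apply/bigcupP; exists e.
  have Hm : matching (helper_edge adjG cls l i C) (internal (P j) |: M).
    split.
    - move=> e /setU1P [->|eM]; last by apply: HM.1.1.
      have := HP j; case: (P j) => [[[s v] w] u] Hl'.
      by exists v, w; split => //; apply: helper Hl'.
    - move=> e1 e2 /setU1P [->|e1M] /setU1P [->|e2M] Hne.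
      + by rewrite eqxx in Hne.
      + by apply: Hd.
      + by rewrite disjoint_sym; apply: Hd.
      + by apply: HM.1.2.
  have E := HM.2 _ Hm (subsetUr _ _).
  have iM : internal (P j) \in M by rewrite -E setU11.
  move: Hn; case: (P j) iM => [[[s v] w] u] iM Hn; apply: Hn; exists v.
  rewrite /= !inE eqxx /=; apply/bigcupP; exists [set v; w] => //; rewrite !inE eqxx.
  done.
pose f j := xchoose (Hcov j).
have Hf : injective f.
  move=> j1 j2 Hfe; apply/eqP; apply/negPn/negP => Hne.
  have /andP [h1 _] : (f j1 \in internal (P j1)) && (f j1 \in cover M) := xchooseP (Hcov j1).
  have /andP [h2 _] : (f j2 \in internal (P j2)) && (f j2 \in cover M) := xchooseP (Hcov j2).
  rewrite -Hfe in h2.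
  by have := Hdisj _ _ Hne; move/pred0P/(_ (f j1)); rewrite /= h1 h2.
have H1 : m <= #|cover M|.
  rewrite -{1}(card_ord m) -(card_imset _ Hf) subset_leq_card //.
  apply/subsetP => x /imsetP [j _ ->]; by have /andP [_ ->] := xchooseP (Hcov j).
apply: (leq_trans H1); apply: (leq_trans (leq_card_cover M)).
rewrite mulnC -sum_nat_const; apply: leq_sum => e eM.
by have [x [y [_ ->]]] := HM.1.1 e eM; rewrite cards2; case: (x != y).
Qed.
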